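(* Let $G$ be a simple, undirected, connected graph on $N$ vertices with edge set $E$ and degree sequence $d_1\le d_2\le\cdots\le d_N$. If $d_j=1$ for $1\le j\le M$, where $M<N$, then $$R^+(G)\ge N(N-4)+2|E|\left[M+\frac{(N-M)^2}{2|E|-M}\right].$$
   Context: For vertices $i,j$ of $G$, $R_{ij}$ denotes the effective resistance between $i$ and $j$ when every edge of $G$ is a unit resistor. The additive degree-Kirchhoff index is $R^+(G)=\sum_{i<j}(d_i+d_j)R_{ij}$, where $d_i$ is the degree of vertex $i$. *)

(* Defs.v *)
From HB Require Import structures.
From mathcomp Require Import all_boot all_order all_algebra.
Set Implicit Arguments. Unset Strict Implicit. Unset Printing Implicit Defensive.
Import Order.TTheory GRing.Theory Num.Theory.
Local Open Scope ring_scope.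

Definition simple_graph (N : nat) (e : rel 'I_N) : Prop :=
  symmetric e /\ irreflexive e.

Definition graph_connected (N : nat) (e : rel 'I_N) : Prop :=
  forall x y : 'I_N, connect e x y.

Definition deg (N : nat) (e : rel 'I_N) (i : 'I_N) : nat := #|[set j | e i j]|.

Definition nedges (N : nat) (e : rel 'I_N) : nat :=
  #|[set p : 'I_N * 'I_N | (p.1 < p.2)%N && e p.1 p.2]|.

Definition laplacian (R : pzRingType) (N : nat) (e : rel 'I_N) : 'M[R]_N :=
  \matrix_(i, j) (if i == j then (deg e i)%:R else if e i j then -1 else 0).

(* Effective resistance between i and j with unit resistors on edges:
   the potential difference w_i - w_j, where w is a potential with
   L w = e_i - e_j (unit current in at i, out at j).  Such a w is
   obtained (as a row vector, L being symmetric) by w := u *m pinvmx L,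
   with u = e_i - e_j, and then w_i - w_j = w *m u^T. *)
Definition eff_res (R : fieldType) (N : nat) (e : rel 'I_N) (i j : 'I_N) : R :=
  let u : 'rV[R]_N := delta_mx 0 i - delta_mx 0 j in
  (u *m pinvmx (laplacian R e) *m u^T) 0 0.

Definition add_deg_kirchhoff (R : fieldType) (N : nat) (e : rel 'I_N) : R :=
  \sum_(i < N) \sum_(j < N | (i < j)%N)
     ((deg e i + deg e j)%:R * eff_res R e i j).

(* Main.v *)
Require Import Defs.
From HB Require Import structures.
From mathcomp Require Import all_boot all_order all_algebra.
From mathcomp Require Import ring lra.
Import Order.TTheory GRing.Theory Num.Theory.
Local Open Scope ring_scope.

Lemma deg_sumR (R : pzRingType) (N : nat) (e : rel 'I_N) (a : 'I_N) :
  (deg e a)%:R = \sum_b (e a b)%:R :> R.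
Proof.
rewrite /deg -sum1_card natr_sum big_mkcond /=; apply: eq_bigr => b _.
by rewrite inE; case: (e a b).
Qed.

Lemma lapE (R : pzRingType) (N : nat) (e : rel 'I_N) (a b : 'I_N) :
  irreflexive e ->
  laplacian R e a b = (a == b)%:R * (deg e a)%:R - (e a b)%:R.
Proof.
move=> irr; rewrite /laplacian mxE; case: eqP => [->|_].
  by rewrite irr mul1r subr0.
rewrite mul0r sub0r. by case: (e a b) => /=; rewrite ?oppr0.
Qed.

Lemma lap_tr (R : pzRingType) (N : nat) (e : rel 'I_N) :
  symmetric e -> (laplacian R e)^T = laplacian R e.
Proof.
move=> sym; apply/matrixP => a b; rewrite !mxE eq_sym sym.
by case: eqP => // ->.
Qed.

Lemma qformE (R : pzRingType) (N : nat) (A : 'M[R]_N) (x y : 'rV[R]_N) :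
  (x *m A *m y^T) 0 0 = \sum_a \sum_b x 0 a * A a b * y 0 b.
Proof.
rewrite mxE exchange_big /=; apply: eq_bigr => b _.
by rewrite mxE mulr_suml; apply: eq_bigr => a _; rewrite mxE.
Qed.

Lemma dotE (R : pzRingType) (N : nat) (x y : 'rV[R]_N) :
  (x *m y^T) 0 0 = \sum_a x 0 a * y 0 a.
Proof. by rewrite mxE; apply: eq_bigr => a _; rewrite mxE. Qed.

Lemma qform_edges (R : comPzRingType) (N : nat) (e : rel 'I_N) (f : 'I_N -> R) :
  symmetric e -> irreflexive e ->
  2 * \sum_a \sum_b f a * laplacian R e a b * f b =
  \sum_a \sum_b (e a b)%:R * (f a - f b) ^+ 2.
Proof.
move=> sym irr.
have E1 : forall a b : 'I_N, (e a b)%:R * (f a - f b) ^+ 2 =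
   (e a b)%:R * f a ^+ 2 + (e a b)%:R * f b ^+ 2 - 2 * ((e a b)%:R * f a * f b) :> R.
  by move=> a b; ring.
have E2 : forall a b : 'I_N, f a * laplacian R e a b * f b =
   (a == b)%:R * ((deg e a)%:R * f a * f b) - (e a b)%:R * f a * f b.
  by move=> a b; rewrite lapE //; ring.
under [in RHS]eq_bigr => a _ do under eq_bigr => b _ do rewrite E1.
under [in LHS]eq_bigr => a _ do under eq_bigr => b _ do rewrite E2.
under [in RHS]eq_bigr => a _ do rewrite sumrB big_split /=.
under [in LHS]eq_bigr => a _ do rewrite sumrB.
rewrite !sumrB big_split /= mulrBr.
have D1 : forall a : 'I_N, \sum_b (a == b)%:R * ((deg e a)%:R * f a * f b) = (deg e a)%:R * f a ^+ 2 :> R.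
  move=> a; rewrite (bigD1 a) //= eqxx mul1r big1 ?addr0; first by rewrite expr2 mulrA.
  by move=> b; rewrite eq_sym => /negbTE ->; rewrite mul0r.
have D2 : forall a : 'I_N, \sum_b (e a b)%:R * f a ^+ 2 = (deg e a)%:R * f a ^+ 2 :> R.
  by move=> a; rewrite deg_sumR mulr_suml.
have D3 : \sum_a \sum_b (e a b)%:R * f b ^+ 2 = \sum_a (deg e a)%:R * f a ^+ 2 :> R.
  rewrite exchange_big /=; apply: eq_bigr => a _; rewrite deg_sumR mulr_suml.
  by apply: eq_bigr => b _; rewrite sym.
rewrite (eq_bigr _ (fun a _ => D1 a)) (eq_bigr _ (fun a _ => D2 a)) D3.
under [X in _ = _ - X]eq_bigr => a _ do rewrite -mulr_sumr.
rewrite -mulr_sumr; ring.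
Qed.
Lemma qform_ge0 (R : realFieldType) (N : nat) (e : rel 'I_N) (f : 'I_N -> R) :
  symmetric e -> irreflexive e ->
  0 <= \sum_a \sum_b f a * laplacian R e a b * f b.
Proof.
move=> sym irr.
have H := @qform_edges R N e f sym irr.
have : 0 <= 2 * \sum_a \sum_b f a * laplacian R e a b * f b.
  rewrite H; apply: sumr_ge0 => a _; apply: sumr_ge0 => b _.
  by apply: mulr_ge0; [apply: ler0n | apply: sqr_ge0].
by rewrite pmulr_rge0 // ltr0n.
Qed.

Lemma ker_const (R : realFieldType) (N : nat) (e : rel 'I_N) (f : 'I_N -> R) :
  simple_graph e -> graph_connected e ->
  (forall a, \sum_b laplacian R e a b * f b = 0) -> forall x y, f x = f y.
Proof.
move=> [sym irr] conn H.
have Q0 : \sum_a \sum_b (e a b)%:R * (f a - f b) ^+ 2 = 0 :> R.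
  rewrite -qform_edges //.
  rewrite (eq_bigr (fun a => f a * \sum_b laplacian R e a b * f b)).
    by rewrite big1 ?mulr0 // => a _; rewrite H mulr0.
  by move=> a _; rewrite mulr_sumr; apply: eq_bigr => b _; rewrite mulrA.
have edge : forall a b, e a b -> f a = f b.
  move=> a b eab.
  have nn : forall c d : 'I_N, 0 <= (e c d)%:R * (f c - f d) ^+ 2 :> R.
    by move=> c d; apply: mulr_ge0; [apply: ler0n | apply: sqr_ge0].
  have Ha := psumr_eq0P (P := predT) (fun c _ => sumr_ge0 _ (fun d _ => nn c d)) Q0.
  have Hb := psumr_eq0P (P := predT) (fun d _ => nn a d) (Ha a isT).
  have := Hb b isT.
  by rewrite eab mul1r => /eqP; rewrite sqrf_eq0 subr_eq0 => /eqP.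
move=> x y; have /connectP [p pth ->] := conn x y.
elim: p x pth => [|z p IH] x //= /andP [exz pth].
by rewrite (edge _ _ exz) IH.
Qed.

Lemma u_sub (R : realFieldType) (N : nat) (e : rel 'I_N) (i j : 'I_N) :
  simple_graph e -> graph_connected e ->
  ((delta_mx 0 i : 'rV[R]_N) - delta_mx 0 j <= laplacian R e)%MS.
Proof.
move=> sg conn; rewrite submxE.
set C := cokermx (laplacian R e).
have LC : laplacian R e *m C = 0 by apply: mulmx_coker.
apply/eqP/matrixP => r k.
clearbody C; rewrite ord1 mulmxBl -!rowE !mxE.
have H : forall a, \sum_b laplacian R e a b * C b k = 0.
  by move=> a; have := congr1 (fun A : 'M_N => A a k) LC; rewrite !mxE.
by rewrite (@ker_const R N e (fun b => C b k) sg conn H i j) subrr.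
Qed.

Lemma qsym (R : comPzRingType) (N : nat) (A : 'M[R]_N) (x y : 'rV[R]_N) :
  A^T = A -> (x *m A *m y^T) 0 0 = (y *m A *m x^T) 0 0.
Proof.
move=> At.
have : ((x *m A *m y^T)^T) 0 0 = (y *m A *m x^T) 0 0.
  by rewrite !trmx_mul trmxK At mulmxA.
by rewrite mxE.
Qed.

Lemma dsym (R : comPzRingType) (N : nat) (x y : 'rV[R]_N) :
  (x *m y^T) 0 0 = (y *m x^T) 0 0.
Proof. by rewrite !dotE; apply: eq_bigr => a _; rewrite mulrC. Qed.

Lemma res_lb (R : realFieldType) (N : nat) (e : rel 'I_N) (i j : 'I_N)
  (x : 'rV[R]_N) :
  simple_graph e -> graph_connected e ->
  2 * (((delta_mx 0 i : 'rV[R]_N) - delta_mx 0 j) *m x^T) 0 0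
   - (x *m laplacian R e *m x^T) 0 0 <= eff_res R e i j.
Proof.
move=> sg conn; have [sym irr] := sg.
rewrite /eff_res.
set u := (delta_mx 0 i : 'rV[R]_N) - delta_mx 0 j.
set L := laplacian R e.
set w := u *m pinvmx L.
have wL : w *m L = u by apply: mulmxKpV; apply: u_sub.
have Lt : L^T = L by apply: lap_tr.
have P : 0 <= ((x - w) *m L *m (x - w)^T) 0 0.
  by rewrite qformE; apply: (@qform_ge0 R N e (fun a => (x - w) 0 a)).
have sub00 : forall A B : 'M[R]_1, (A - B) 0 0 = A 0 0 - B 0 0.
  by move=> A B; rewrite !mxE.
rewrite linearB /= !mulmxBl !mulmxBr !sub00 wL in P.
rewrite (@qsym R N L x w Lt) wL (@dsym R N u w) (@dsym R N u x) in P.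
rewrite -/w (@dsym R N u x); lra.
Qed.

Lemma sum_ind (R : pzRingType) (N : nat) (i : 'I_N) (F : 'I_N -> R) :
  \sum_a (i == a)%:R * F a = F i.
Proof.
rewrite (bigD1 i) //= eqxx mul1r big1 ?addr0 // => a /negbTE.
by rewrite eq_sym => ->; rewrite mul0r.
Qed.

Lemma sum_ind_r (R : pzRingType) (N : nat) (i : 'I_N) (F : 'I_N -> R) :
  \sum_a F a * (i == a)%:R = F i.
Proof.
rewrite (bigD1 i) //= eqxx mulr1 big1 ?addr0 // => a /negbTE.
by rewrite eq_sym => ->; rewrite mulr0.
Qed.

Lemma sum_ind3 (R : pzRingType) (N : nat) (i : 'I_N) (F : 'I_N -> R) c :
  \sum_a F a * ((i == a)%:R * c) = F i * c.
Proof.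
rewrite (bigD1 i) //= eqxx mul1r big1 ?addr0 // => a /negbTE.
by rewrite eq_sym => ->; rewrite mul0r mulr0.
Qed.

Lemma sum_ind4 (R : pzRingType) (N : nat) (i : 'I_N) (F : 'I_N -> R) c :
  \sum_a (i == a)%:R * c * F a = c * F i.
Proof.
rewrite (bigD1 i) //= eqxx mul1r big1 ?addr0 // => a /negbTE.
by rewrite eq_sym => ->; rewrite !mul0r.
Qed.

Lemma pair_lb (R : realFieldType) (N : nat) (e : rel 'I_N) (i j : 'I_N) :
  simple_graph e -> graph_connected e -> i != j ->
  0 < (deg e i)%:R :> R -> 0 < (deg e j)%:R :> R ->
  (2 : R) + (deg e i)%:R / (deg e j)%:R + (deg e j)%:R / (deg e i)%:R
   - (e i j)%:R * (2 / (deg e i)%:R + 2 / (deg e j)%:R)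
  <= ((deg e i)%:R + (deg e j)%:R) * eff_res R e i j.
Proof.
move=> sg conn nij Di Dj; have [sym irr] := sg.
set di : R := (deg e i)%:R; set dj : R := (deg e j)%:R.
set x : 'rV[R]_N := di^-1 *: delta_mx 0 i - dj^-1 *: delta_mx 0 j.
have xE : forall a, x 0 a = (i == a)%:R * di^-1 - (j == a)%:R * dj^-1.
  by move=> a; rewrite !mxE /= (eq_sym a i) (eq_sym a j) mulrC [in X in _ - X]mulrC.
have uE : forall a, ((delta_mx 0 i : 'rV[R]_N) - delta_mx 0 j) 0 a
   = (i == a)%:R - (j == a)%:R.
  by move=> a; rewrite !mxE eqxx /= (eq_sym a i) (eq_sym a j).
have nji : (j == i) = false by rewrite eq_sym (negbTE nij).
have H := @res_lb R N e i j x sg conn.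
rewrite dotE qformE in H.
have e1 : \sum_a ((delta_mx 0 i : 'rV[R]_N) - delta_mx 0 j) 0 a * x 0 a
    = di^-1 + dj^-1.
  under eq_bigr => a _ do rewrite uE mulrBl.
  rewrite sumrB !sum_ind !xE !eqxx (negbTE nij) nji /=; ring.
have e2 : \sum_a \sum_b x 0 a * laplacian R e a b * x 0 b
    = di^-1 + dj^-1 + 2 * (e i j)%:R * di^-1 * dj^-1.
  have G : forall a, \sum_b x 0 a * laplacian R e a b * x 0 b =
      x 0 a * (laplacian R e a i * di^-1 - laplacian R e a j * dj^-1).
    move=> a; under eq_bigr => b _ do rewrite -mulrA.
    rewrite -mulr_sumr; congr (_ * _).
    under eq_bigr => b _ do rewrite xE mulrBr.
    by rewrite sumrB !sum_ind3.
  rewrite (eq_bigr _ (fun a _ => G a)).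
  under eq_bigr => a _ do rewrite xE mulrBl.
  rewrite sumrB !sum_ind4 !lapE // !eqxx (negbTE nij) nji.
  rewrite (sym j i) /= -/di -/dj.
  rewrite !irr /= !mul1r !mul0r !subr0 !sub0r.
  have di0 : di != 0 by rewrite gt_eqF.
  have dj0 : dj != 0 by rewrite gt_eqF.
  case: (e i j) => /=; field; by rewrite di0 dj0.
rewrite e1 e2 in H.
have key : di^-1 + dj^-1 - 2 * (e i j)%:R * di^-1 * dj^-1 <= eff_res R e i j.
  by lra.
have pos : 0 <= di + dj by lra.
have := ler_wpM2l pos key.
apply: le_trans; rewrite le_eqVlt; apply/orP; left; apply/eqP.
have di0 : di != 0 by rewrite gt_eqF.
have dj0 : dj != 0 by rewrite gt_eqF.
case: (e i j) => /=; field; by rewrite di0 dj0.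
Qed.

Lemma tri_sum (R : comPzRingType) (N : nat) (g : 'I_N -> 'I_N -> R) :
  (forall i j : 'I_N, g i j = g j i) ->
  2 * \sum_(i < N) \sum_(j < N | (i < j)%N) g i j =
  \sum_i \sum_j g i j - \sum_i g i i.
Proof.
move=> gs.
have S1 : forall i : 'I_N, \sum_j g i j =
   \sum_(j < N | (i < j)%N) g i j + (g i i + \sum_(j < N | (j < i)%N) g i j).
  move=> i; rewrite (bigID (fun j : 'I_N => (i < j)%N)) /=; congr (_ + _).
  rewrite (bigD1 i) /= ?ltnn //; congr (_ + _); apply: eq_bigl => j.
  by rewrite -leqNgt [RHS]ltn_neqAle -val_eqE andbC.
rewrite (eq_bigr _ (fun i _ => S1 i)) !big_split /=.
have S2 : \sum_(i < N) \sum_(j < N | (j < i)%N) g i j = \sum_(i < N) \sum_(j < N | (i < j)%N) g i j.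
  rewrite (eq_bigr (fun i : 'I_N => \sum_(j < N) (if (j < i)%N then g i j else 0)));
    last by move=> i _; rewrite big_mkcond.
  rewrite exchange_big /=; apply: eq_bigr => i _; rewrite [RHS]big_mkcond /=.
  by apply: eq_bigr => j _; rewrite gs.
rewrite S2; ring.
Qed.

Lemma nedgesE (R : pzRingType) (N : nat) (e : rel 'I_N) :
  (nedges e)%:R = \sum_(a < N) \sum_(b < N | (a < b)%N) (e a b)%:R :> R.
Proof.
rewrite /nedges -sum1_card natr_sum big_mkcond /=.
under [RHS]eq_bigr => a _ do rewrite big_mkcond.
rewrite pair_bigA /=; apply: eq_bigr => p _; rewrite inE.
by case: (p.1 < p.2)%N; case: (e p.1 p.2).
Qed.

Lemma handshake (R : comPzRingType) (N : nat) (e : rel 'I_N) :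
  symmetric e -> irreflexive e ->
  \sum_a (deg e a)%:R = 2 * (nedges e)%:R :> R.
Proof.
move=> sym irr; rewrite nedgesE (@tri_sum R N (fun a b => (e a b)%:R)).
  rewrite [X in _ - X]big1 ?subr0; last by move=> a _ /=; rewrite irr.
  by apply: eq_bigr => a _; rewrite deg_sumR.
by move=> a b; rewrite sym.
Qed.

Definition gfun (R : realFieldType) (N : nat) (e : rel 'I_N) (i j : 'I_N) : R :=
  2 + (deg e i)%:R / (deg e j)%:R + (deg e j)%:R / (deg e i)%:R
   - (e i j)%:R * (2 / (deg e i)%:R + 2 / (deg e j)%:R).
Arguments gfun R {N} e i j.

Lemma sum_g (R : realFieldType) (N : nat) (e : rel 'I_N) :
  symmetric e -> irreflexive e -> (forall a, 0 < (deg e a)%:R :> R) ->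
  \sum_(i < N) \sum_(j < N | (i < j)%N) gfun R e i j =
  N%:R * N%:R - 4 * N%:R + 2 * (nedges e)%:R * \sum_a ((deg e a)%:R)^-1.
Proof.
move=> sym irr Dpos.
set D := fun a : 'I_N => (deg e a)%:R : R.
set h := fun a : 'I_N => ((deg e a)%:R : R)^-1.
have hD : forall a, D a * h a = 1.
  by move=> a; rewrite /D /h mulfV // gt_eqF.
have gE : forall i j, gfun R e i j = 2 + D i * h j + D j * h i
    - 2 * ((e i j)%:R * h i) - 2 * ((e i j)%:R * h j).
  by move=> i j; rewrite /gfun /D /h; ring.
have gs : forall i j : 'I_N, gfun R e i j = gfun R e j i.
  by move=> i j; rewrite !gE sym; ring.
have T := @tri_sum R N (gfun R e) gs.
set S := \sum_a D a.
set H := \sum_a h a.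
have Sm : S = 2 * (nedges e)%:R by rewrite /S /D handshake.
have Sd : \sum_(i < N) gfun R e i i = 4 * N%:R.
  rewrite (eq_bigr (fun _ => 4)); last first.
    move=> i _; rewrite gE irr /= !mul0r hD; ring.
  by rewrite sumr_const card_ord mulr_natr.
have Sg : \sum_(i < N) \sum_(j < N) gfun R e i j
    = 2 * N%:R * N%:R + 2 * S * H - 4 * N%:R.
  under eq_bigr => i _ do under eq_bigr => j _ do rewrite gE.
  under eq_bigr => i _ do rewrite !sumrB !big_split /=.
  rewrite !sumrB !big_split /=.
  have P1 : \sum_(i < N) \sum_(j < N) (1 : R) = N%:R * N%:R.
    rewrite (eq_bigr (fun _ => N%:R)); last by move=> i _; rewrite sumr_const card_ord.
    by rewrite sumr_const card_ord mulr_natr.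
  have P2 : \sum_(i < N) \sum_(j < N) D i * h j = S * H.
    by rewrite /S mulr_suml; apply: eq_bigr => i _; rewrite mulr_sumr.
  have P3 : \sum_(i < N) \sum_(j < N) D j * h i = S * H.
    by rewrite exchange_big /S mulr_suml; apply: eq_bigr => i _; rewrite mulr_sumr.
  have P4 : \sum_(i < N) \sum_(j < N) 2 * ((e i j)%:R * h i) = 2 * N%:R.
    rewrite (eq_bigr (fun _ => 2)); last first.
      by move=> i _; rewrite -mulr_sumr -mulr_suml -deg_sumR -/(D i) hD mulr1.
    by rewrite sumr_const card_ord mulr_natr.
  have P5 : \sum_(i < N) \sum_(j < N) 2 * ((e i j)%:R * h j) = 2 * N%:R.
    rewrite -P4 exchange_big /=; apply: eq_bigr => i _.
    by apply: eq_bigr => j _; rewrite sym.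
  rewrite P1 P2 P3 P4 P5; ring.
rewrite Sd Sg in T.
rewrite -Sm -/H.
have T2 : \sum_(i < N) \sum_(j < N | (i < j)%N) gfun R e i j =
  (2 * N%:R * N%:R + 2 * S * H - 4 * N%:R - 4 * N%:R) / 2.
  by rewrite -T mulrC mulrA mulVf ?mul1r // pnatr_eq0.
by rewrite T2; field.
Qed.

Lemma hm_bound (R : realFieldType) (N M : nat) (e : rel 'I_N) :
  (forall a, (0 < deg e a)%N) ->
  (forall j : 'I_N, (j < M)%N -> deg e j = 1%N) ->
  (M < N)%N ->
  \sum_a (deg e a)%:R = 2 * (nedges e)%:R :> R ->
  M%:R + (N%:R - M%:R) ^+ 2 / (2 * (nedges e)%:R - M%:R)
    <= \sum_a ((deg e a)%:R : R)^-1.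
Proof.
move=> Dpos D1 ltMN hs.
have leM : (M <= N)%N by apply: ltnW.
set D := fun a : 'I_N => (deg e a)%:R : R.
have D1R : forall a, 1 <= D a by move=> a; rewrite /D ler1n Dpos.
have D0 : forall a, D a != 0 by move=> a; rewrite gt_eqF // (lt_le_trans ltr01).
have cM : \sum_(i < N | (i < M)%N) (1 : R) = M%:R.
  by rewrite (big_ord_narrow leM) sumr_const card_ord.
have cK : \sum_(i < N | ~~ (i < M)%N) (1 : R) = N%:R - M%:R.
  have E : \sum_(i < N) (1:R) = N%:R by rewrite sumr_const card_ord.
  rewrite (bigID (fun i : 'I_N => (i < M)%N)) /= cM in E; lra.
rewrite (bigID (fun i : 'I_N => (i < M)%N)) /=.
rewrite (eq_bigr (fun _ => 1)); last by move=> i /D1 ->; rewrite invr1.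
rewrite cM lerD2l.
have hs' : \sum_(i < N | ~~ (i < M)%N) D i = 2 * (nedges e)%:R - M%:R.
  have sM : \sum_(i < N | (i < M)%N) D i = M%:R.
    by rewrite -cM; apply: eq_bigr => i /D1; rewrite /D => ->.
  rewrite -hs (bigID (fun i : 'I_N => (i < M)%N) predT) /= sM; ring.
rewrite -hs' -cK.
set S := \sum_(i < N | ~~ (i < M)%N) D i.
set K := \sum_(i < N | ~~ (i < M)%N) (1 : R).
have K1 : 1 <= K.
  rewrite /K cK; have : (M.+1 <= N)%N := ltMN.
  rewrite -(ler_nat R) -addn1 natrD => H; lra.
have SK : K <= S by apply: ler_sum => i _; apply: D1R.
have S0 : S != 0 by rewrite gt_eqF //; lra.
have gen : forall t : R, 2 * t * K - t ^+ 2 * S <= \sum_(i < N | ~~ (i < M)%N) (D i)^-1.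
  move=> t.
  have pt : forall i, 2 * t - t ^+ 2 * D i <= (D i)^-1.
    move=> i; rewrite -subr_ge0.
    have -> : (D i)^-1 - (2 * t - t ^+ 2 * D i) = (1 - t * D i) ^+ 2 / D i.
      by field; apply: D0.
    apply: divr_ge0; first by apply: sqr_ge0.
    by apply: le_trans (D1R i); apply: ler01.
  have := @ler_sum R 'I_N (index_enum 'I_N) (fun i : 'I_N => ~~ (i < M)%N) _ _ (fun i _ => pt i).
  apply: le_trans; rewrite le_eqVlt; apply/orP; left; apply/eqP.
  rewrite sumrB -!mulr_sumr /K.
  by congr (_ - _); rewrite !sumr_const; ring.
have := gen (K / S).
apply: le_trans; rewrite le_eqVlt; apply/orP; left; apply/eqP.
field; exact: S0.
Qed.

Theorem theorem2 (R : realFieldType) (N M : nat) (e : rel 'I_N) :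
  simple_graph e ->
  graph_connected e ->
  (forall i j : 'I_N, (i <= j)%N -> (deg e i <= deg e j)%N) ->
  (forall j : 'I_N, (j < M)%N -> deg e j = 1%N) ->
  (M < N)%N ->
  add_deg_kirchhoff R e >=
    (N%:R * (N%:R - 4)) +
    (2 * (nedges e)%:R) *
      (M%:R + (N%:R - M%:R) ^+ 2 / (2 * (nedges e)%:R - M%:R)).
Proof.
move=> sg conn _ Hdeg ltMN; have [sym irr] := sg.
have h0 : (0 < N)%N by apply: leq_ltn_trans ltMN.
case: (ltnP 1 N) => [h1|hN].
- have Dpos : forall a, (0 < deg e a)%N.
    move=> a.
    pose b : 'I_N := if val a == 0%N then Ordinal h1 else Ordinal h0.
    have nab : a != b.
      have [a0|an0] := eqVneq (val a) 0%N.
        rewrite /b a0 eqxx; apply/eqP => E; by move: a0; rewrite E.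
      rewrite /b (negbTE an0); apply/eqP => E; by move: an0; rewrite E.
    have /connectP [p pth lst] := conn a b.
    case: p pth lst => [|z p] /=.
      by move=> _ E; rewrite -E eqxx in nab.
    move=> /andP [eaz _] _; apply/card_gt0P; exists z; by rewrite inE.
  have DposR : forall a, 0 < (deg e a)%:R :> R by move=> a; rewrite ltr0n.
  have L1 : \sum_(i < N) \sum_(j < N | (i < j)%N) gfun R e i j <= add_deg_kirchhoff R e.
    apply: ler_sum => i _; apply: ler_sum => j ij.
    rewrite /gfun natrD; apply: pair_lb => //; apply/eqP => E; by rewrite E ltnn in ij.
  rewrite sum_g // in L1.
  have L2 := @hm_bound R N M e Dpos Hdeg ltMN (@handshake R N e sym irr).
  have m0 : 0 <= 2 * (nedges e)%:R :> R by apply: mulr_ge0; [apply: ler0n | apply: ler0n].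
  have L3 := ler_wpM2l m0 L2.
  rewrite /=; lra.
- have N1 : N = 1%N by apply/eqP; rewrite eqn_leq hN h0.
  subst N.
  rewrite /add_deg_kirchhoff (@nedgesE R 1 e).
  have Z : forall F : 'I_1 -> 'I_1 -> R, \sum_(i < 1) \sum_(j < 1 | (i < j)%N) F i j = 0.
    move=> F; apply: big1 => i _; apply: big1 => j.
    by rewrite (ord1 i) (ord1 j) ltnn.
  rewrite !Z mulr0 mul0r addr0.
  rewrite /=; lra.
Qed.
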